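(* Let $n$ be a positive integer and, for $k\in\{0,\dots,n-1\}$, let \[ b_k=(-1)^{n-k}\frac{n!}{k!}\binom{2n-k-1}{n-1},\qquad \beta_k=(-1)^{n-1}\frac{(2n-k-1)!}{k!\,(n-k-1)!}. \] Let $\widetilde\Delta(z)=z^n+\sum_{k=0}^{n-1}b_kz^k+e^{-z}\sum_{k=0}^{n-1}\beta_kz^k$. Then, for every $z\in\mathbb C$, \[ \widetilde\Delta(z)=\frac{z^{2n}}{(n-1)!}\int_0^1t^{n-1}(1-t)^ne^{-zt}\,dt. \] *)

(* Defs.v *)
From Stdlib Require Export Reals Factorial Binomial.
From Coquelicot Require Export Coquelicot.

Definition cexp (z : C) : C :=
  (exp (Re z) * cos (Im z), exp (Re z) * sin (Im z))%R.

Definition cpow (z : C) (m : nat) : C := pow_n (K := C_Ring) z m.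

Definition bcoef (n k : nat) : R :=
  ((-1) ^ (n - k) * INR (fact n) / INR (fact k)
     * Binomial.C (2 * n - k - 1) (n - 1))%R.

Definition betacoef (n k : nat) : R :=
  ((-1) ^ (n - 1) * INR (fact (2 * n - k - 1))
     / (INR (fact k) * INR (fact (n - k - 1))))%R.

Fixpoint csum (f : nat -> C) (n : nat) : C :=
  match n with
  | O => RtoC 0
  | S m => Cplus (csum f m) (f m)
  end.

Definition DeltaT (n : nat) (z : C) : C :=
  Cplus (Cplus (cpow z n) (csum (fun k => Cmult (RtoC (bcoef n k)) (cpow z k)) n))
        (Cmult (cexp (Copp z))
               (csum (fun k => Cmult (RtoC (betacoef n k)) (cpow z k)) n)).

(* Main.v *)
Require Import Defs.
From Stdlib Require Import Lra Lia Psatz Bool.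

Definition CR := C_R_NormedModule.
Ltac Ceq := apply injective_projections; simpl; unfold plus, opp, scal, mult; simpl; ring.

Lemma CR_plus (a b : C) : @plus (NormedModule.AbelianGroup _ CR) a b = Cplus a b.
Proof. reflexivity. Qed.
Lemma CR_opp (a : C) : @opp (NormedModule.AbelianGroup _ CR) a = Copp a.
Proof. reflexivity. Qed.

Lemma pair_decomp (a b : R) : (a, b) = @plus (NormedModule.AbelianGroup _ CR) (scal a ((1,0):C)) (scal b ((0,1):C)) :> C.
Proof. rewrite CR_plus, !scal_R_Cmult. apply injective_projections; simpl; ring. Qed.

Lemma is_derive_pairC (f g : R -> R) (x f' g' : R) :
  is_derive f x f' -> is_derive g x g' ->
  is_derive (V := CR) (fun t => (f t, g t) : C) x ((f', g') : C).
Proof.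
  intros Hf Hg.
  rewrite pair_decomp.
  apply is_derive_ext with (f := fun t => @plus (NormedModule.AbelianGroup _ CR) (scal (f t) ((1,0):C)) (scal (g t) ((0,1):C))).
  { intros t. now rewrite <- pair_decomp. }
  apply is_derive_plus; apply (is_derive_scal_l (V := CR)); assumption.
Qed.

Lemma Cmult_comm_aux (c : C) (k : R) (u : C) : Cmult c (Cmult (RtoC k) u) = Cmult (RtoC k) (Cmult c u).
Proof. ring. Qed.

Lemma is_derive_Cmult_const (c : C) (f : R -> C) (x : R) (l : C) :
  is_derive (V := CR) f x l -> is_derive (V := CR) (fun t => Cmult c (f t)) x (Cmult c l).
Proof.
  intros Hf.
  assert (HL : is_linear (U := CR) (V := CR) (fun u : C => Cmult c u)).
  { split.
    - intros u v. exact (Cmult_plus_distr_l c u v).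
    - intros k u. rewrite !scal_R_Cmult. exact (Cmult_comm_aux c k u).
    - exists (Cmod c + 1). split.
      + pose proof (Cmod_ge_0 c). lra.
      + intros u. rewrite <- !Cmod_norm, Cmod_mult.
        pose proof (Cmod_ge_0 u). pose proof (Cmod_ge_0 c). nra. }
  unfold is_derive in *.
  pose proof (filterdiff_comp (K:=R_AbsRing) (U:=R_NormedModule) (V:=CR) (W:=CR) _ _ _ _ Hf (filterdiff_linear (K:=R_AbsRing) (U:=CR) (V:=CR) _ HL (F := filtermap f (locally x)))) as H.
  eapply filterdiff_ext_lin. exact H.
  intros y. simpl. rewrite !scal_R_Cmult. ring.
Qed.

Lemma prod_aux (y f' : R) (gx : C) (fx : R) (g' : C) :
  @plus (NormedModule.AbelianGroup _ CR) (scal (y * f')%R gx) (scal fx (scal y g')) =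
  scal y (Cplus (Cmult (RtoC f') gx) (Cmult (RtoC fx) g')).
Proof. rewrite CR_plus, !scal_R_Cmult, RtoC_mult. change (@eq C ((RtoC y * RtoC f' * gx) + (RtoC fx * (RtoC y * g')))%C (RtoC y * (RtoC f' * gx + RtoC fx * g'))%C). ring. Qed.

Lemma is_derive_RC_mult (f : R -> R) (g : R -> C) (x f' : R) (g' : C) :
  is_derive f x f' -> is_derive (V := CR) g x g' ->
  is_derive (V := CR) (fun t => Cmult (RtoC (f t)) (g t)) x
     (Cplus (Cmult (RtoC f') (g x)) (Cmult (RtoC (f x)) g')).
Proof.
  intros Hf Hg. unfold is_derive in *.
  pose proof (filterdiff_scal_fct (U := R_NormedModule) (V := CR) x f g _ _ Rmult_comm Hf Hg) as H.
  eapply filterdiff_ext.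
  2: eapply filterdiff_ext_lin; [exact H|].
  - intros t. exact (scal_R_Cmult (f t) (g t)).
  - intros y. exact (prod_aux y f' (g x) (f x) g').
Qed.


Definition Ez (z : C) (t : R) : C := cexp (Copp (Cmult z (RtoC t))).

Lemma Ez_eq (z : C) t : Ez z t = ((exp (- (fst z * t)) * cos (- (snd z * t)))%R, (exp (- (fst z * t)) * sin (- (snd z * t)))%R).
Proof.
  unfold Ez, cexp. destruct z as [a b]. simpl.
  replace (- (a * t - b * 0))%R with (- (a * t))%R by ring.
  replace (- (a * 0 + b * t))%R with (- (b * t))%R by ring. reflexivity.
Qed.

Lemma is_derive_Ez (z : C) (t : R) :
  is_derive (V := CR) (Ez z) t (Cmult (Copp z) (Ez z t)).
Proof.
  eapply is_derive_ext. { intros s. symmetry. apply Ez_eq. }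
  rewrite Ez_eq.
  match goal with |- is_derive _ _ ?l => 
   replace l with (((- fst z * (exp (- (fst z * t)) * cos (- (snd z * t))) + snd z * (exp (- (fst z * t)) * sin (- (snd z * t))))%R,
                    (- fst z * (exp (- (fst z * t)) * sin (- (snd z * t))) - snd z * (exp (- (fst z * t)) * cos (- (snd z * t))))%R) : C) end.
  2: { destruct z; apply injective_projections; simpl; ring. }
  apply is_derive_pairC.
  - auto_derive; auto. ring.
  - auto_derive; auto. ring.
Qed.


Fixpoint P (a : nat -> R) (x : R) (N : nat) : R :=
  match N with O => a O | S N => (a O + x * P (fun m => a (S m)) x N)%R end.

Definition dA (a : nat -> R) (m : nat) : R := (INR (S m) * a (S m))%R.

Lemma P_ext a b x N : (forall m, a m = b m) -> P a x N = P b x N.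
Proof.
  revert a b; induction N; intros a b H; simpl. apply H.
  rewrite H, (IHN (fun m => a (S m)) (fun m => b (S m))); auto.
Qed.

Lemma P_plus a b x N : P (fun m => a m + b m)%R x N = (P a x N + P b x N)%R.
Proof.
  revert a b; induction N; intros a b; simpl. ring.
  rewrite (IHN (fun m => a (S m)) (fun m => b (S m))). ring.
Qed.

Lemma P_zero a x N : (forall m, a m = 0%R) -> P a x N = 0%R.
Proof.
  revert a; induction N; intros a H; simpl. apply H.
  rewrite H, IHN; auto. ring.
Qed.

Lemma P_at0 a N : P a 0 N = a O.
Proof. destruct N; simpl; ring. Qed.

Lemma P_last a x N : P a x (S N) = (P a x N + a (S N) * x ^ (S N))%R.
Proof.
  revert a; induction N; intros a. simpl. ring.
  change (P a x (S (S N))) with (a O + x * P (fun m => a (S m)) x (S N))%R.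
  rewrite IHN. simpl. ring.
Qed.

Lemma P_sum a x N : P a x N = sum_f_R0 (fun i => a i * x ^ i)%R N.
Proof.
  induction N. simpl. ring.
  rewrite P_last, IHN. simpl. reflexivity.
Qed.

Lemma P_shift a x s N : (forall i, (i < s)%nat -> a i = 0%R) ->
  P a x (s + N) = (x ^ s * P (fun i => a (s + i)%nat) x N)%R.
Proof.
  revert a; induction s; intros a H.
  - simpl. rewrite Rmult_1_l. apply P_ext. auto.
  - simpl. rewrite H by lia.
    rewrite IHs. 2: { intros i Hi. apply H. lia. }
    rewrite (P_ext (fun i => a (S (s + i))) (fun i => a (S s + i)%nat)) by auto. ring.
Qed.

Lemma P_deriv N : forall a x, is_derive (fun y => P a y (S N)) x (P (dA a) x N).
Proof.
  induction N; intros a x.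
  - simpl. unfold dA. 
    apply is_derive_ext with (f := fun y => (a O + y * a 1%nat)%R). { intros; simpl; ring. }
    auto_derive; auto.
  - apply is_derive_ext with (f := fun y => (a O + y * P (fun m => a (S m)) y (S N))%R).
    { intros y. reflexivity. }
    replace (P (dA a) x (S N)) with
      (0 + (1 * P (fun m => a (S m)) x (S N) + x * P (dA (fun m => a (S m))) x N))%R.
    2: { change (P (dA a) x (S N)) with (dA a O + x * P (fun m => dA a (S m)) x N)%R.
         change (P (fun m => a (S m)) x (S N)) with (a 1%nat + x * P (fun m => a (S (S m))) x N)%R.
         rewrite Rplus_0_l, Rmult_1_l, Rplus_assoc, <- Rmult_plus_distr_l, <- P_plus. unfold dA.
         rewrite (P_ext (fun m => (a (S (S m)) + INR (S m) * a (S (S m))))%R (fun m => INR (S (S m)) * a (S (S m)))%R).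
         simpl. ring. intros m. rewrite (S_INR (S m)). ring. }
    apply (@is_derive_plus R_AbsRing R_NormedModule (fun _ => a O) (fun y => y * P (fun m => a (S m)) y (S N))%R).
    apply (@is_derive_const R_AbsRing R_NormedModule).
    apply (is_derive_mult (fun y => y) (fun y => P (fun m => a (S m)) y (S N))).
    apply (@is_derive_id R_AbsRing). apply IHN. intros; apply Rmult_comm.
Qed.

Lemma P_deriv_bound a L x : a (S (S L)) = 0%R ->
  is_derive (fun y => P a y (S L)) x (P (dA a) x (S L)).
Proof.
  intros H. rewrite P_last. unfold dA at 2. rewrite H, Rmult_0_r, Rmult_0_l, Rplus_0_r.
  apply P_deriv.
Qed.

Lemma iter_dA j a m : Nat.iter j dA a m = (INR (fact (m + j)) / INR (fact m) * a (m + j)%nat)%R.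
Proof.
  revert m; induction j; intros m.
  - simpl. rewrite Nat.add_0_r. field. apply INR_fact_neq_0.
  - simpl Nat.iter. unfold dA at 1. rewrite IHj.
    replace (S m + j)%nat with (m + S j)%nat by lia.
    change (fact (S m)) with (S m * fact m)%nat. rewrite mult_INR.
    field. split. apply INR_fact_neq_0. apply not_0_INR. lia.
Qed.


Lemma P_ext_le a b x N : (forall m, (m <= N)%nat -> a m = b m) -> P a x N = P b x N.
Proof.
  revert a b; induction N; intros a b H; simpl. apply H; lia.
  rewrite H by lia. rewrite (IHN (fun m => a (S m)) (fun m => b (S m))); auto.
  intros m Hm; apply H; lia.
Qed.

Lemma sum_const_l (c : R) f N : sum_f_R0 (fun i => c * f i)%R N = (c * sum_f_R0 f N)%R.
Proof. rewrite scal_sum. apply sum_eq. intros; ring. Qed.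

Section Coefs.
Variable n : nat.

Definition a0 (m : nat) : R :=
  if (andb (n - 1 <=? m)%nat (m <=? 2 * n - 1)%nat) then (Binomial.C n (m - (n - 1)) * (-1) ^ (m - (n - 1)))%R else 0%R.
Definition a1 (m : nat) : R :=
  if (andb (n <=? m)%nat (m <=? 2 * n - 1)%nat) then ((-1) ^ n * Binomial.C (n - 1) (m - n))%R else 0%R.

Lemma a0_in m : (n - 1 <= m <= 2 * n - 1)%nat -> a0 m = (Binomial.C n (m - (n - 1)) * (-1) ^ (m - (n - 1)))%R.
Proof. intros [H1 H2]. unfold a0. apply Nat.leb_le in H1, H2. now rewrite H1, H2. Qed.
Lemma a0_out m : (m < n - 1 \/ 2 * n - 1 < m)%nat -> a0 m = 0%R.
Proof. intros H. unfold a0. destruct (n - 1 <=? m)%nat eqn:E1; destruct (m <=? 2 * n - 1)%nat eqn:E2; simpl; auto.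
  apply Nat.leb_le in E1, E2. lia. Qed.
Lemma a1_in m : (n <= m <= 2 * n - 1)%nat -> a1 m = ((-1) ^ n * Binomial.C (n - 1) (m - n))%R.
Proof. intros [H1 H2]. unfold a1. apply Nat.leb_le in H1, H2. now rewrite H1, H2. Qed.
Lemma a1_out m : (m < n \/ 2 * n - 1 < m)%nat -> a1 m = 0%R.
Proof. intros H. unfold a1. destruct (n <=? m)%nat eqn:E1; destruct (m <=? 2 * n - 1)%nat eqn:E2; simpl; auto.
  apply Nat.leb_le in E1, E2. lia. Qed.

Hypothesis hn : (0 < n)%nat.

Lemma poly0 t : P a0 t (2 * n - 1) = (t ^ (n - 1) * (1 - t) ^ n)%R.
Proof.
  replace (2 * n - 1)%nat with ((n - 1) + n)%nat by lia.
  rewrite P_shift. 2: { intros i Hi. apply a0_out. lia. }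
  f_equal.
  rewrite (P_ext_le _ (fun i => Binomial.C n i * (-1) ^ i)%R).
  2: { intros m Hm. rewrite a0_in by lia. replace (n - 1 + m - (n - 1))%nat with m by lia. reflexivity. }
  rewrite P_sum.
  replace (1 - t)%R with (- t + 1)%R by ring. rewrite binomial.
  apply sum_eq. intros i Hi. rewrite pow1, Rmult_1_r.
  replace (- t)%R with (-1 * t)%R by ring. rewrite Rpow_mult_distr. ring.
Qed.

Lemma poly1 t : P a1 (t - 1) (2 * n - 1) = (t ^ (n - 1) * (1 - t) ^ n)%R.
Proof.
  replace (2 * n - 1)%nat with (n + (n - 1))%nat by lia.
  rewrite P_shift. 2: { intros i Hi. apply a1_out. lia. }
  rewrite (P_ext_le _ (fun i => (-1) ^ n * Binomial.C (n - 1) i)%R).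
  2: { intros m Hm. rewrite a1_in by lia. replace (n + m - n)%nat with m by lia. reflexivity. }
  rewrite P_sum.
  assert (Hb : (t ^ (n-1) = sum_f_R0 (fun i => Binomial.C (n-1) i * (t-1)^i) (n-1))%R).
  { replace t with ((t-1)+1)%R at 1 by ring. rewrite binomial. apply sum_eq; intros; rewrite pow1; ring. }
  rewrite Hb.
  replace (1 - t)%R with (-1 * (t - 1))%R by ring. rewrite Rpow_mult_distr.
  rewrite (sum_eq _ (fun i => (-1) ^ n * (Binomial.C (n - 1) i * (t - 1) ^ i))%R).
  2: { intros; ring. }
  rewrite sum_const_l. ring.
Qed.

End Coefs.


Section Ds.
Variable n : nat.
Hypothesis hn : (0 < n)%nat.

Definition D0 (j : nat) (t : R) : R := P (Nat.iter j dA (a0 n)) t (2 * n - 1).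
Definition D1 (j : nat) (t : R) : R := P (Nat.iter j dA (a1 n)) (t - 1) (2 * n - 1).

Lemma iter_vanish a j m : (forall m, (2 * n - 1 < m)%nat -> a m = 0%R) -> (2 * n - 1 < m)%nat ->
  Nat.iter j dA a m = 0%R.
Proof. intros H Hm. rewrite iter_dA, H by lia. ring. Qed.

Lemma a0_van m : (2 * n - 1 < m)%nat -> a0 n m = 0%R.
Proof. intros; apply a0_out; lia. Qed.
Lemma a1_van m : (2 * n - 1 < m)%nat -> a1 n m = 0%R.
Proof. intros; apply a1_out; lia. Qed.

Lemma D0_deriv j t : is_derive (D0 j) t (D0 (S j) t).
Proof.
  unfold D0. replace (2 * n - 1)%nat with (S (2 * n - 2)) by lia.
  apply P_deriv_bound. apply iter_vanish. intros; apply a0_out; lia. lia.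
Qed.

Lemma D1_deriv j t : is_derive (D1 j) t (D1 (S j) t).
Proof.
  unfold D1. replace (2 * n - 1)%nat with (S (2 * n - 2)) by lia.
  assert (H1 : is_derive (fun s : R => (s - 1)%R) t 1%R). { auto_derive; auto. }
  pose proof (is_derive_comp (fun y => P (Nat.iter j dA (a1 n)) y (S (2 * n - 2))) (fun s => (s - 1)%R) t _ 1%R
     (P_deriv_bound _ _ (t - 1) (iter_vanish _ j (S (S (2 * n - 2))) a1_van ltac:(lia))) H1) as H.
  unfold scal in H; simpl in H; unfold mult in H; simpl in H; rewrite Rmult_1_l in H; exact H.
Qed.

Lemma D0_D1 j : forall t, D0 j t = D1 j t.
Proof.
  induction j; intros t.
  - unfold D0, D1. simpl. rewrite poly0, poly1; auto.
  - rewrite <- (is_derive_unique _ _ _ (D0_deriv j t)).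
    rewrite <- (is_derive_unique _ _ _ (D1_deriv j t)).
    apply Derive_ext. auto.
Qed.

Lemma D0_at0 j : D0 j 0 = (INR (fact j) * a0 n j)%R.
Proof. unfold D0. rewrite P_at0, iter_dA. simpl. field. Qed.

Lemma D1_at1 j : D1 j 1 = (INR (fact j) * a1 n j)%R.
Proof. unfold D1. replace (1 - 1)%R with 0%R by ring. rewrite P_at0, iter_dA. simpl. field. Qed.

Lemma D0_2n t : D0 (2 * n) t = 0%R.
Proof. unfold D0. apply P_zero. intros m. rewrite iter_dA, a0_van by lia. ring. Qed.

Lemma D0_0 t : D0 0 t = (t ^ (n - 1) * (1 - t) ^ n)%R.
Proof. unfold D0. simpl. apply poly0; auto. Qed.

End Ds.


Section Co.
Variable n : nat.
Hypothesis hn : (0 < n)%nat.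

Lemma fnz m : INR (fact m) <> 0%R.
Proof. apply INR_fact_neq_0. Qed.

Lemma coef0 k : (k < n)%nat ->
  (INR (fact (2 * n - 1 - k)) * a0 n (2 * n - 1 - k))%R = (INR (fact (n - 1)) * bcoef n k)%R.
Proof.
  intros Hk. rewrite a0_in by lia.
  replace (2 * n - 1 - k - (n - 1))%nat with (n - k)%nat by lia.
  unfold bcoef, Binomial.C.
  replace (n - (n - k))%nat with k by lia.
  replace (2 * n - k - 1 - (n - 1))%nat with (n - k)%nat by lia.
  replace (2 * n - k - 1)%nat with (2 * n - 1 - k)%nat by lia.
  field. repeat split; apply fnz.
Qed.

Lemma coefn : (INR (fact (2 * n - 1 - n)) * a0 n (2 * n - 1 - n))%R = INR (fact (n - 1)).
Proof.
  rewrite a0_in by lia.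
  replace (2 * n - 1 - n - (n - 1))%nat with 0%nat by lia.
  replace (2 * n - 1 - n)%nat with (n - 1)%nat by lia.
  unfold Binomial.C. rewrite Nat.sub_0_r. simpl. field. apply fnz.
Qed.

Lemma coefz0 i : (i < n - 1)%nat -> a0 n (2 * n - 1 - (n + S i)) = 0%R.
Proof. intros; apply a0_out; lia. Qed.

Lemma coefz1 i : (i < n)%nat -> a1 n (2 * n - 1 - (n + i)) = 0%R.
Proof. intros; apply a1_out; lia. Qed.

Lemma coef1 k : (k < n)%nat ->
  (INR (fact (2 * n - 1 - k)) * a1 n (2 * n - 1 - k))%R = (- (INR (fact (n - 1)) * betacoef n k))%R.
Proof.
  intros Hk. rewrite a1_in by lia.
  unfold betacoef, Binomial.C.
  replace (2 * n - 1 - k - n)%nat with (n - k - 1)%nat by lia.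
  replace (n - 1 - (n - k - 1))%nat with k by lia.
  replace (2 * n - k - 1)%nat with (2 * n - 1 - k)%nat by lia.
  assert (Hs : ((-1) ^ n = - (-1) ^ (n - 1))%R).
  { destruct n. lia. simpl. rewrite Nat.sub_0_r. ring. }
  rewrite Hs. field. repeat split; apply fnz.
Qed.

End Co.


Ltac toC := match goal with |- @eq _ ?a ?b => change (@eq C a b) end.

Lemma cpow_S z k : cpow z (S k) = Cmult z (cpow z k).
Proof. reflexivity. Qed.
Lemma cpow_0 z : cpow z 0 = RtoC 1.
Proof. reflexivity. Qed.

Lemma csum_shift f m : csum f (S m) = Cplus (f O) (csum (fun k => f (S k)) m).
Proof. induction m; simpl. ring. simpl in IHm. rewrite IHm. ring. Qed.

Lemma csum_add f a b : csum f (a + b) = Cplus (csum f a) (csum (fun i => f (a + i)%nat) b).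
Proof. induction b; simpl. rewrite Nat.add_0_r. ring. rewrite Nat.add_succ_r. simpl. rewrite IHb. ring. Qed.

Lemma csum_ext_le f g m : (forall k, (k < m)%nat -> f k = g k) -> csum f m = csum g m.
Proof. induction m; intros H; simpl. reflexivity. rewrite IHm, H by (auto; lia). reflexivity. Qed.

Lemma csum_mult_l c f m : csum (fun k => Cmult c (f k)) m = Cmult c (csum f m).
Proof. induction m; simpl. ring. rewrite IHm. ring. Qed.

Lemma csum_zero f m : (forall k, (k < m)%nat -> f k = RtoC 0) -> csum f m = RtoC 0.
Proof. intros H. rewrite (csum_ext_le f (fun _ => Cmult (RtoC 0) (RtoC 0))). rewrite csum_mult_l. ring.
  intros k Hk. rewrite H by auto. ring. Qed.

Section Main.
Variable z : C.
Variable D : nat -> R -> R.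
Hypothesis HD : forall j t, is_derive (D j) t (D (S j) t).

Definition T (m : nat) (t : R) : C := csum (fun k => Cmult (cpow z k) (RtoC (D (m - 1 - k)%nat t))) m.

Lemma T_S m t : T (S m) t = Cplus (RtoC (D m t)) (Cmult z (T m t)).
Proof.
  unfold T. rewrite csum_shift. rewrite cpow_0. replace (S m - 1 - 0)%nat with m by lia.
  rewrite <- csum_mult_l. f_equal. ring.
  apply csum_ext_le. intros k Hk. rewrite cpow_S. replace (S m - 1 - S k)%nat with (m - 1 - k)%nat by lia. ring.
Qed.

Lemma T_deriv m : forall t, is_derive (V := CR) (fun t => Copp (Cmult (Ez z t) (T m t))) t
   (Cmult (Ez z t) (Cminus (Cmult (cpow z m) (RtoC (D 0 t))) (RtoC (D m t)))).
Proof.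
  induction m; intros t.
  - eapply is_derive_ext. { intros s. instantiate (1 := fun _ => RtoC 0). simpl. unfold T. simpl. toC. ring. }
    replace (Cmult (Ez z t) (Cminus (Cmult (cpow z 0) (RtoC (D 0%nat t))) (RtoC (D 0%nat t)))) with (@zero (NormedModule.AbelianGroup _ CR)).
    apply is_derive_const. rewrite cpow_0. change (@zero (NormedModule.AbelianGroup _ CR)) with (RtoC 0). toC. ring.
  - eapply is_derive_ext.
    { intros s. instantiate (1 := fun s => Cplus (Copp (Cmult (RtoC (D m s)) (Ez z s))) (Cmult z (Copp (Cmult (Ez z s) (T m s))))).
      simpl. rewrite T_S. toC. ring. }
    pose proof (is_derive_plus (V := CR) _ _ t _ _
       (is_derive_opp (V := CR) _ _ _ (is_derive_RC_mult (D m) (Ez z) t _ _ (HD m t) (is_derive_Ez z t)))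
       (is_derive_Cmult_const z _ t _ (IHm t))) as H.
    eapply (is_derive_ext (V := CR)) in H. 2: { intros s. reflexivity. }
    match goal with |- is_derive _ _ ?l => replace l with (@plus (NormedModule.AbelianGroup _ CR) (opp
          (Cplus (Cmult (RtoC (D (S m) t)) (Ez z t)) (Cmult (RtoC (D m t)) (Cmult (Copp z) (Ez z t)))))
       (Cmult z (Cmult (Ez z t) (Cminus (Cmult (cpow z m) (RtoC (D 0%nat t))) (RtoC (D m t)))))) end.
    exact H.
    rewrite CR_plus. change (opp ?x) with (Copp x). rewrite cpow_S. toC. ring.
Qed.

End Main.


Lemma is_RInt_R_lin (f g : R -> R) a b If Ig (p q : R) :
  is_RInt f a b If -> is_RInt g a b Ig ->
  is_RInt (fun t => p * f t + q * g t)%R a b (p * If + q * Ig)%R.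
Proof.
  intros Hf Hg.
  exact (is_RInt_plus _ _ a b _ _ (is_RInt_scal _ a b p If Hf) (is_RInt_scal _ a b q Ig Hg)).
Qed.

Lemma is_RInt_Cmult_const (c : C) (g : R -> C) a b (I : C) :
  is_RInt (V := CR) g a b I -> is_RInt (V := CR) (fun t => Cmult c (g t)) a b (Cmult c I).
Proof.
  intros H.
  pose proof (is_RInt_fct_extend_fst (U := R_NormedModule) (V := R_NormedModule) g a b I H) as H1.
  pose proof (is_RInt_fct_extend_snd (U := R_NormedModule) (V := R_NormedModule) g a b I H) as H2.
  destruct c as [c1 c2].
  replace (Cmult (c1, c2) I) with ((c1 * fst I + (- c2) * snd I)%R, (c1 * snd I + c2 * fst I)%R).
  2: { destruct I; apply injective_projections; simpl; ring. }
  apply (is_RInt_fct_extend_pair (U := R_NormedModule) (V := R_NormedModule)).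
  - eapply is_RInt_ext. 2: apply (is_RInt_R_lin _ _ _ _ _ _ c1 (- c2) H1 H2).
    intros x _. simpl. ring.
  - eapply is_RInt_ext. 2: apply (is_RInt_R_lin _ _ _ _ _ _ c1 c2 H2 H1).
    intros x _. simpl. ring.
Qed.


Lemma csum_count_eq f a b : a = b -> csum f a = csum f b.
Proof. intros ->; reflexivity. Qed.

Lemma RtoC_opp' x : RtoC (- x) = Copp (RtoC x).
Proof. apply injective_projections; simpl; ring. Qed.

Lemma Ez0 z : Ez z 0 = RtoC 1.
Proof. rewrite Ez_eq. rewrite !Rmult_0_r, Ropp_0, exp_0, cos_0, sin_0. apply injective_projections; simpl; ring. Qed.

Lemma Ez1 z : Ez z 1 = cexp (Copp z).
Proof. unfold Ez, cexp. destruct z as [a b]. simpl. f_equal; f_equal; f_equal; ring. Qed.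

Section Fin.
Variable n : nat.
Hypothesis hn : (0 < n)%nat.
Variable z : C.

Lemma T0_val : T z (D0 n) (2 * n) 0 =
  Cmult (RtoC (INR (fact (n - 1)))) (Cplus (cpow z n) (csum (fun k => Cmult (RtoC (bcoef n k)) (cpow z k)) n)).
Proof.
  unfold T. rewrite (csum_count_eq _ (2 * n) (n + S (n - 1))) by lia.
  rewrite csum_add, csum_shift.
  cbv beta. rewrite (csum_zero _ (n - 1)).
  2: { intros k Hk. rewrite D0_at0, coefz0 by lia. rewrite Rmult_0_r. ring. }
  rewrite Nat.add_0_r, D0_at0, coefn by auto.
  rewrite (csum_ext_le _ (fun k => Cmult (RtoC (INR (fact (n - 1)))) (Cmult (RtoC (bcoef n k)) (cpow z k)))).
  2: { intros k Hk. rewrite D0_at0, coef0 by auto. rewrite RtoC_mult. ring. }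
  rewrite csum_mult_l. ring.
Qed.

Lemma T1_val : T z (D0 n) (2 * n) 1 =
  Copp (Cmult (RtoC (INR (fact (n - 1)))) (csum (fun k => Cmult (RtoC (betacoef n k)) (cpow z k)) n)).
Proof.
  unfold T. rewrite (csum_count_eq _ (2 * n) (n + n)) by lia.
  rewrite csum_add.
  cbv beta.
  rewrite (csum_zero (fun i => Cmult (cpow z (n + i)) (RtoC (D0 n (2 * n - 1 - (n + i)) 1))) n).
  2: { intros k Hk. rewrite D0_D1, D1_at1, coefz1 by lia. rewrite Rmult_0_r. ring. }
  rewrite (csum_ext_le (fun k => Cmult (cpow z k) (RtoC (D0 n (2 * n - 1 - k) 1))) (fun k => Cmult (RtoC (- INR (fact (n - 1)))) (Cmult (RtoC (betacoef n k)) (cpow z k)))).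
  2: { intros k Hk. rewrite D0_D1, D1_at1, coef1 by auto. rewrite RtoC_opp', RtoC_opp', RtoC_mult. ring. }
  rewrite csum_mult_l, RtoC_opp'. ring.
Qed.

End Fin.


Theorem lemma4p5 (n : nat) (hn : (0 < n)%nat) (z : C) :
  DeltaT n z =
  Cmult (Cdiv (cpow z (2 * n)) (RtoC (INR (fact (n - 1)))))
        (RInt (V := C_R_CompleteNormedModule)
           (fun t : R => Cmult (RtoC (t ^ (n - 1) * (1 - t) ^ n)%R)
                               (cexp (Copp (Cmult z (RtoC t)))))
           0 1).
Proof.
  set (g := fun t : R => Cmult (RtoC (t ^ (n - 1) * (1 - t) ^ n)%R) (Ez z t)).
  change (fun t : R => Cmult (RtoC (t ^ (n - 1) * (1 - t) ^ n)%R) (cexp (Copp (Cmult z (RtoC t))))) with g.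
  set (c := cpow z (2 * n)).
  set (f := fun t => Copp (Cmult (Ez z t) (T z (D0 n) (2 * n) t))).
  assert (Hg : forall t, is_derive (V := CR) g t
     (Cplus (Cmult (RtoC (D0 n 1 t)) (Ez z t)) (Cmult (RtoC (D0 n 0 t)) (Cmult (Copp z) (Ez z t))))).
  { intros t. eapply is_derive_ext. 2: apply (is_derive_RC_mult (D0 n 0) (Ez z) t _ _ (D0_deriv n hn 0 t) (is_derive_Ez z t)).
    intros s. unfold g. rewrite D0_0 by auto. reflexivity. }
  assert (H1 : is_RInt (V := CR) (fun t => Cmult c (g t)) 0 1 (minus (f 1) (f 0))).
  { eapply is_RInt_ext.
    2: { apply (is_RInt_derive (V := C_R_CompleteNormedModule) f
           (fun t => Cmult (Ez z t) (Cminus (Cmult (cpow z (2 * n)) (RtoC (D0 n 0 t))) (RtoC (D0 n (2 * n) t))))).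
         - intros x _. apply (T_deriv z (D0 n) (D0_deriv n hn)).
         - intros x _. apply (ex_derive_continuous (V := CR)).
           eexists. eapply is_derive_ext. 2: apply (is_derive_Cmult_const c g x _ (Hg x)).
           intros s. unfold g, c. rewrite D0_2n, D0_0 by auto. toC. ring. }
    intros x _. unfold g, c. rewrite D0_2n, D0_0 by auto. toC. ring. }
  assert (H2 : ex_RInt (V := CR) g 0 1).
  { apply (ex_RInt_continuous (V := C_R_CompleteNormedModule)). intros x _.
    apply (ex_derive_continuous (V := CR)). eexists. apply Hg. }
  pose proof (is_RInt_Cmult_const c g 0 1 _ (RInt_correct (V := C_R_CompleteNormedModule) g 0 1 H2)) as H3.
  pose proof (is_RInt_unique (V := C_R_CompleteNormedModule) _ _ _ _ H1) as E1.
  pose proof (is_RInt_unique (V := C_R_CompleteNormedModule) _ _ _ _ H3) as E3.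
  rewrite E1 in E3.
  assert (HF : RtoC (INR (fact (n - 1))) <> RtoC 0).
  { intros H. apply (INR_fact_neq_0 (n - 1)). apply (f_equal fst) in H. exact H. }
  replace (Cmult (Cdiv c (RtoC (INR (fact (n - 1))))) (RInt (V := C_R_CompleteNormedModule) g 0 1)) with
     (Cdiv (Cmult c (RInt (V := C_R_CompleteNormedModule) g 0 1)) (RtoC (INR (fact (n - 1))))).
  2: { unfold Cdiv. ring. }
  rewrite <- E3. unfold f. change (minus ?a ?b) with (Cplus a (Copp b)).
  rewrite Ez0, Ez1, T0_val, T1_val by auto.
  unfold DeltaT. field. exact HF.
Qed.
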